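(* Let $\Omega\subset\mathbb{R}^N$ be a bounded open set, $T>0$, $Q_T=\Omega\times(0,T)$, and let $s,p:\bar\Omega\to\mathbb{R}$ be continuous functions with $1<s(x)p(x)<\infty$ for all $x\in\bar\Omega$. Then there is a positive constant $C$ such that for all $f\in L^{s^+p(x),\infty}(Q_T)$, $$\||f|^{s(x)}\|_{L^{p(x),\infty}(Q_T)}\le C\left(\|f\|^{s^+}_{L^{s^+p(x),\infty}(Q_T)}+1\right).$$
   Context: $s^+=\max_{\bar\Omega}s$. Exponents depending on $x$ are regarded as functions on $Q_T$ independent of $t$. For a measurable exponent $q$, $\|u\|_{L^{q(x)}(Q_T)}=\inf\{\mu>0:\iint_{Q_T}|u/\mu|^{q(x)}dx\,dt\le1\}$. The weak variable exponent Lorentz space $L^{q(x),\infty}(Q_T)$ consists of measurable $f$ on $Q_T$ with $\|f\|_{L^{q(x),\infty}(Q_T)}:=\sup_{\lambda>0}\lambda\|\chi_{\{(x,t)\in Q_T:|f(x,t)|>\lambda\}}\|_{L^{q(x)}(Q_T)}<\infty$. *)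

(* Defs.v *)
From HB Require Import structures.
From mathcomp Require Import all_boot all_order all_algebra.
From mathcomp Require Import all_classical all_reals all_analysis.
Set Implicit Arguments. Unset Strict Implicit. Unset Printing Implicit Defensive.
Import Order.TTheory GRing.Theory Num.Theory.
Import numFieldNormedType.Exports.
Local Open Scope classical_set_scope.
Local Open Scope ring_scope.

(* Points of R^N are N-tuples of reals; (N.-tuple R) carries the product
   (coordinate-generated, i.e. Borel) sigma-algebra of the library. *)

Section Defs.
Variable R : realType.

(** max-distance on R^N (equivalent to the Euclidean one, so it induces the
    same open sets, bounded sets, closures and continuity) *)
Definition distN (N : nat) (x y : N.-tuple R) : R :=
  \big[Num.max/0]_(i < N) `|tnth x i - tnth y i|.

Definition open_RN (N : nat) (O : set (N.-tuple R)) : Prop :=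
  forall x, O x -> exists2 e : R, 0 < e & forall y, distN x y < e -> O y.

Definition bounded_RN (N : nat) (O : set (N.-tuple R)) : Prop :=
  exists M : R, forall x, O x -> forall i : 'I_N, `|tnth x i| <= M.

Definition closure_RN (N : nat) (O : set (N.-tuple R)) : set (N.-tuple R) :=
  [set x | forall e : R, 0 < e -> exists2 y, O y & distN x y < e].

Definition continuous_on_RN (N : nat) (K : set (N.-tuple R))
  (s : N.-tuple R -> R) : Prop :=
  forall x, K x -> forall e : R, 0 < e ->
    exists2 d : R, 0 < d & forall y, K y -> distN x y < d -> `|s y - s x| < e.

(** N-dimensional Lebesgue measure, as the iterated product of the
    one-dimensional Lebesgue measure (Tonelli): for measurable A,
    lebN (n+1) A = int_R lebN n {t | (x :: t) in A} dx. *)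
Fixpoint lebN (n : nat) : set (n.-tuple R) -> \bar R :=
  match n return set (n.-tuple R) -> \bar R with
  | 0 => fun A => if `[< A [tuple] >] then 1%E else 0%E
  | n'.+1 => fun A =>
      (\int[@lebesgue_measure R]_x lebN [set t | A (cons_tuple (x : R) t)])%E
  end.

Definition lebQ (N : nat) (A : set (N.-tuple R * R)) : \bar R :=
  (\int[@lebN N]_x (@lebesgue_measure R [set t | A (x, t)]))%E.

Definition QT (N : nat) (Om : set (N.-tuple R)) (T : R) : set (N.-tuple R * R) :=
  [set z | Om z.1 /\ 0 < z.2 < T].

Definition Lvar_norm (N : nat) (D : set (N.-tuple R * R))
  (q : N.-tuple R * R -> R) (u : N.-tuple R * R -> R) : \bar R :=
  ereal_inf [set m%:E | m in [set m : R | 0 < m /\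
     (\int[@lebQ N]_(z in D) ((`|u z / m| `^ q z)%:E) <= 1)%E]].

Definition Lweak_norm (N : nat) (D : set (N.-tuple R * R))
  (q : N.-tuple R * R -> R) (f : N.-tuple R * R -> R) : \bar R :=
  ereal_sup [set (l%:E * Lvar_norm D q (\1_[set z | (l < `|f z|)%R] : _ -> R))%E
            | l in [set l : R | 0 < l]].

Definition in_Lweak (N : nat) (D : set (N.-tuple R * R))
  (q : N.-tuple R * R -> R) (f : N.-tuple R * R -> R) : Prop :=
  measurable_fun D f /\ (Lweak_norm D q f < +oo)%E.

End Defs.

(* Main.v *)
Require Import Defs.
From HB Require Import structures.
From mathcomp Require Import all_boot all_order all_algebra.
From mathcomp Require Import all_classical all_reals all_analysis.
From mathcomp Require Import ring lra.
Import Order.TTheory GRing.Theory Num.Theory.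
Local Open Scope classical_set_scope.
Local Open Scope ring_scope.

Module Aux.
Import numFieldNormedType.Exports.
Import HBNNSimple.
Section gen.
Local Open Scope ereal_scope.
Context d (T : measurableType d) (R : realType).
Variable mu : set T -> \bar R.
Hypothesis mu0 : mu set0 = 0.
Hypothesis muge0 : forall A, measurable A -> 0 <= mu A.

Lemma gsintegralE (h : {nnsfun T >-> R}) :
  sintegral mu h = \sum_(x \in range h) x%:E * mu (h @^-1` [set x]).
Proof.
rewrite (fsbig_widen (range h) setT)//= => x [_ Nfx] /=.
rewrite preimage10 ?mu0 ?mule0//.
Qed.

Lemma gsintegral_ge0 (h : {nnsfun T >-> R}) : 0 <= sintegral mu h.
Proof.
rewrite gsintegralE; apply: fsume_ge0 => x [t _ <-].
apply: mule_ge0; first by rewrite lee_fin.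
by apply: muge0; exact: measurable_sfunP.
Qed.

Definition nnint (f : T -> \bar R) := ereal_sup [set sintegral mu h |
  h in [set h : {nnsfun T >-> R} | forall x, (h x)%:E <= f x]].

Lemma nnint_ge0 f : 0 <= nnint f -> True. Proof. by []. Qed.

Lemma nnint0 f : (forall x, f x = 0) -> nnint f = 0.
Proof.
move=> f0; apply/eqP; rewrite eq_le; apply/andP; split.
  apply: ub_ereal_sup => _ [h /= hf <-].
  rewrite gsintegralE fsbig1// => _ [t _ <-].
  have : (h t)%:E <= 0 by rewrite -(f0 t).
  rewrite lee_fin => ht; have -> : h t = 0%R.
    by apply/eqP; rewrite eq_le ht /=; exact: fun_ge0.
  by rewrite mul0e.
apply: ereal_sup_ubound; exists nnsfun0 => //=.
  by move=> x; rewrite /= f0.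
have := @gsintegralE nnsfun0; rewrite fsbig1 => [->//|_ [t _ <-]]; by rewrite mul0e.
Qed.

Lemma gintegralE D f : (forall x, D x -> 0 <= f x) ->
  integral mu D f = nnint (f \_ D).
Proof.
move=> f0; rewrite /integral /=.
have -> : (f \_ D)^\- = (fun _ => 0).
  apply/funext => x; rewrite funeneg_restrict /patch; case: ifPn => xD //.
  by rewrite (ge0_funenegE f0 xD).
have -> : (f \_ D)^\+ = f \_ D.
  apply/funext => x; rewrite funepos_restrict /patch; case: ifPn => xD //.
  by rewrite (ge0_funeposE f0 xD).
rewrite -/(nnint (f \_ D)) -/(nnint (fun _ => 0)) (@nnint0 (fun _ => 0))// sube0//.
Qed.

Lemma nnint_le f g : (forall x, f x <= g x) -> nnint f <= nnint g.
Proof.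
move=> fg; apply: ub_ereal_sup => _ [h /= hf <-].
apply: ereal_sup_ubound; exists h => //= x; exact: le_trans (hf x) (fg x).
Qed.

Lemma gintegral_ge0 D f : (forall x, D x -> 0 <= f x) -> 0 <= integral mu D f.
Proof.
move=> f0; rewrite gintegralE//; apply: ereal_sup_ubound.
exists nnsfun0 => //=.
  move=> x; rewrite /patch; case: ifPn => // xD; apply: f0; by rewrite -inE.
have := @gsintegralE nnsfun0; rewrite fsbig1 => [->//|_ [t _ <-]]; by rewrite mul0e.
Qed.

Lemma gintegral_mono D E f g : (forall x, D x -> 0 <= f x) ->
  (forall x, E x -> 0 <= g x) -> (forall x, (f \_ D) x <= (g \_ E) x) ->
  integral mu D f <= integral mu E g.
Proof. by move=> f0 g0 fg; rewrite !gintegralE//; exact: nnint_le. Qed.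

End gen.

Section gdom.
Local Open Scope ereal_scope.
Context d (T : measurableType d) (R : realType).

Lemma gintegral_dom (m1 m2 : set T -> \bar R) (B D : set T) (f : T -> \bar R) :
  m1 set0 = 0 -> (forall A, measurable A -> 0 <= m1 A) ->
  m2 set0 = 0 -> (forall A, measurable A -> 0 <= m2 A) ->
  (forall A, measurable A -> A `<=` B -> m1 A <= m2 A) ->
  (forall x, D x -> 0 <= f x) -> (forall x, D x -> f x != 0 -> B x) ->
  integral m1 D f <= integral m2 D f.
Proof.
move=> m10 m1ge0 m20 m2ge0 m12 f0 fB.
rewrite !gintegralE//; apply: ub_ereal_sup => _ [h /= hf <-].
apply: le_trans (ereal_sup_ubound _); last by exists h.
rewrite !gsintegralE//; apply: lee_fsum; first exact: fimfunP.
move=> _ [t _ <-].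
have [->|ht] := eqVneq (h t) 0%R; first by rewrite !mul0e.
apply: lee_wpmul2l; first by rewrite lee_fin; exact: fun_ge0.
apply: m12; first exact: measurable_sfunP.
move=> y /= hy.
have hy0 : (0 < h y)%R by rewrite hy lt_def ht /= fun_ge0.
have := hf y; rewrite /patch; case: ifPn => yD.
  move=> fy; apply: fB; first by rewrite -inE.
  by apply/negP => /eqP fy0; move: fy; rewrite fy0 lee_fin leNgt hy0.
by rewrite lee_fin leNgt hy0.
Qed.
End gdom.

Local Open Scope ereal_scope.
Section lebR.
Variable R : realType.
Definition lebR : set R -> \bar R := @lebesgue_measure R.
Let lebR0 : lebR set0 = 0. Proof. exact: measure0. Qed.
Let lebR_ge0 A : 0 <= lebR A. Proof. exact: measure_ge0. Qed.
Let lebR_sa : semi_sigma_additive lebR.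
Proof. exact: (@measure_semi_sigma_additive _ _ _ (@lebesgue_measure R)). Qed.
HB.instance Definition _ := isMeasure.Build _ R R lebR lebR0 lebR_ge0 lebR_sa.
Let lebR_sf : sigma_finite setT lebR.
Proof. exact: (@sigma_finiteT _ _ _ (@lebesgue_measure R)). Qed.
HB.instance Definition _ := Measure_isSigmaFinite.Build _ R R lebR lebR_sf.
End lebR.

Section lebNsec.
Variable R : realType.

Lemma lebN_ge0 n (A : set (n.-tuple R)) : 0 <= lebN A.
Proof.
elim: n A => [|n IH] A /=; first by case: asboolP.
by apply: integral_ge0 => x _; exact: IH.
Qed.

Lemma lebN0 n : lebN (set0 : set (n.-tuple R)) = 0.
Proof.
elim: n => [|n IH] /=; first by case: asboolP.
rewrite (eq_integral (cst 0)) ?integral0// => x _; exact: IH.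
Qed.

Definition boxN n (M : R) : set (n.-tuple R) := [set t | forall i, (`|tnth t i| <= M)%R].

Lemma measurable_boxN n M : measurable (boxN n M).
Proof.
rewrite (_ : boxN n M = \bigcap_(i in [set: 'I_n]) ((@tnth n R)^~ i @^-1` `[(- M)%R, M%R]%classic)).
  apply: fin_bigcap_measurable; first exact: finite_finset.
  move=> i _; rewrite -[X in measurable X]setTI; apply: measurable_tnth => //.
apply/seteqP; split=> t /=.
  by move=> h i _ /=; rewrite in_itv /= -ler_norml.
by move=> h i; have := h i I; rewrite /= in_itv /= -ler_norml.
Qed.

Definition consf n (z : R * n.-tuple R) : n.+1.-tuple R := cons_tuple z.1 z.2.

Lemma measurable_consf n : measurable_fun setT (@consf n).
Proof. exact: measurable_cons. Qed.

Lemma consf_box n M : @consf n @^-1` boxN n.+1 M = `[(- M)%R, M%R]%classic `*` boxN n M.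
Proof.
apply/seteqP; split=> -[x t] /=.
  move=> h; split.
    by have := h ord0; rewrite /consf tnth0 /= in_itv /= -ler_norml.
  by move=> i; have := h (lift ord0 i); rewrite /consf tnthS.
move=> [] /=; rewrite in_itv /= -ler_norml => xM tM i.
case: (unliftP ord0 i) => [j ->|->]; first by rewrite /consf tnthS.
by rewrite /consf tnth0.
Qed.

Section nuS.
Variables (n : nat) (nu : {finite_measure set (n.-tuple R) -> \bar R}) (M : R).

Definition nuS (A : set (n.+1.-tuple R)) : \bar R :=
  ((@lebesgue_measure R) \x nu) (@consf n @^-1` (A `&` boxN n.+1 M)).

Let nuS0 : nuS set0 = 0.
Proof. by rewrite /nuS set0I preimage_set0 measure0. Qed.

Let nuS_ge0 A : 0 <= nuS A.
Proof. exact: measure_ge0. Qed.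

Let mpre A : measurable A -> measurable (@consf n @^-1` (A `&` boxN n.+1 M)).
Proof.
move=> mA; rewrite -[X in measurable X]setTI; apply: measurable_consf => //.
exact: measurableI (measurable_boxN _ _).
Qed.

Let nuS_sigma_additive : semi_sigma_additive nuS.
Proof.
move=> F mF tF mUF; rewrite /nuS setI_bigcupl preimage_bigcup.
apply: measure_semi_sigma_additive.
- by move=> k; exact: mpre.
- apply/trivIsetP => /= i j _ _ ij; rewrite -preimage_setI.
  rewrite setIACA setIid.
  by move/trivIsetP : tF => /(_ _ _ _ _ ij) ->//; rewrite set0I preimage_set0.
- by rewrite -preimage_bigcup -setI_bigcupl; exact: mpre.
Qed.

HB.instance Definition _ := isMeasure.Build _ _ _ nuS
  nuS0 nuS_ge0 nuS_sigma_additive.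

Let nuS_fin : fin_num_fun nuS.
Proof.
move=> A mA; rewrite ge0_fin_numE//.
apply: (@le_lt_trans _ _ (((@lebesgue_measure R) \x nu) (`[(- M)%R, M%R]%classic `*` boxN n M))).
  rewrite /nuS -consf_box; apply: le_measure; rewrite ?inE.
  - exact: mpre.
  - rewrite -[X in measurable X]setTI; apply: measurable_consf => //; exact: measurable_boxN.
  - by apply: preimage_subset; exact: subIsetr.
rewrite product_measure1E//; last exact: measurable_boxN.
change (@lebesgue_measure R (`[(- M)%R, M%R]%classic) * nu (boxN n M) < +oo).
rewrite lebesgue_measure_itv /= lte_mul_pinfty//.
- case: ifPn => //; rewrite lte_fin -subr_gt0 => h; rewrite lee_fin; exact: ltW.
- by case: ifPn.
- by rewrite -ge0_fin_numE//; exact: fin_num_measure (measurable_boxN _ _).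
Qed.

HB.instance Definition _ := Measure_isFinite.Build _ _ _ nuS nuS_fin.

End nuS.

Lemma lebN_dom n (M : R) : exists nu : {finite_measure set (n.-tuple R) -> \bar R},
  forall A, measurable A -> A `<=` boxN n M -> lebN A <= nu A.
Proof.
elim: n => [|n [nu IH]].
  exists (@dirac _ _ [tuple] R) => A _ _ /=; rewrite diracE /indic.
  by case: asboolP => h; rewrite ?(mem_set h) ?(memNset h).
exists (@nuS n nu M) => A mA AB /=.
rewrite /nuS (setIidl AB) /product_measure1.
apply: (@gintegral_mono _ _ _ lebesgue_measure) => //.
- by move=> x _; exact: lebN_ge0.
- move=> x; rewrite /patch !in_setT /=.
  rewrite [X in _ <= nu X](_ : _ = [set t | A (cons_tuple x t)]); last first.
    by apply/seteqP; split=> t /=; rewrite /xsection /= inE.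
  apply: IH.
  + rewrite -[X in measurable X]setTI.
    apply: (@measurable_cons _ _ _ _ (cst x) n id) => //.
  + move=> t /= /AB h i; have := h (lift ord0 i); by rewrite tnthS.
Qed.

Lemma lebQ0 N : lebQ (set0 : set (N.-tuple R * R)) = 0.
Proof.
rewrite /lebQ gintegralE; [|exact: lebN0|by move=> x _; exact: measure_ge0].
apply: nnint0; [exact: lebN0|].
by move=> x; rewrite /patch; case: ifPn => // _; rewrite /= measure0.
Qed.

Lemma lebQ_ge0 N (A : set (N.-tuple R * R)) : 0 <= lebQ A.
Proof.
apply: gintegral_ge0.
- exact: lebN0.
- by move=> x _; exact: measure_ge0.
Qed.

Lemma lebQ_dom N (M : R) : exists nu : {finite_measure set (N.-tuple R) -> \bar R},
  forall A, measurable A -> A `<=` boxN N M `*` setT ->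
    lebQ A <= (nu \x lebR R) A.
Proof.
have [nu Hnu] := lebN_dom N M; exists nu => A mA AB.
rewrite /lebQ /product_measure1.
have -> : (fun x => lebR R (xsection A x)) = (fun x => lebesgue_measure [set t | A (x, t)]).
  apply/funext => x; rewrite /lebR; congr (lebesgue_measure _).
  by apply/seteqP; split=> t /=; rewrite /xsection /= inE.
apply: (@gintegral_dom _ _ _ _ _ (boxN N M)).
- exact: lebN0.
- by move=> B _; exact: lebN_ge0.
- exact: measure0.
- by move=> B _; exact: measure_ge0.
- exact: Hnu.
- by move=> x _; exact: measure_ge0.
- move=> x _; case: (pselect (boxN N M x)) => // xB.
  have -> : [set t | A (x, t)] = set0.
    by apply/seteqP; split=> t //= /AB [].
  by rewrite measure0 eqxx.
Qed.

Lemma lebQ_fin N (Om : set (N.-tuple R)) (Tm : R) : bounded_RN Om ->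
  exists M : R, (0 <= M)%R /\ forall (c : R) (g : N.-tuple R * R -> R), (0 <= c)%R ->
   (forall z, QT Om Tm z -> (0 <= g z <= c)%R) ->
   \int[@lebQ R N]_(z in QT Om Tm) (g z)%:E <= (c * M)%:E.
Proof.
move=> [M0 HM0].
have [nu Hnu] := lebQ_dom N M0.
pose B := boxN N M0 `*` `[0%R, Tm]%classic.
have mB : measurable B by apply: measurableX; [exact: measurable_boxN|].
have QB : QT Om Tm `<=` B.
  move=> z [Oz /andP[z0 zT]]; split; first exact: HM0.
  by rewrite /= in_itv /= (ltW z0) (ltW zT).
have Bfin : (nu \x lebR R) B \is a fin_num.
  rewrite ge0_fin_numE// product_measure1E//; last exact: measurable_boxN.
  change (nu (boxN N M0) * @lebesgue_measure R (`[0%R, Tm]%classic) < +oo).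
  rewrite lebesgue_measure_itv /= lte_mul_pinfty//.
  - exact: fin_num_measure (measurable_boxN _ _).
  - by case: ifPn; rewrite ?ltry.
exists (fine ((nu \x lebR R) B)); split.
  by rewrite fine_ge0.
move=> c g c0 hg.
apply: (@le_trans _ _ (\int[nu \x lebR R]_(z in QT Om Tm) (g z)%:E)).
  apply: (@gintegral_dom _ _ _ (@lebQ R N) (nu \x lebR R) (boxN N M0 `*` setT)).
  - exact: lebQ0.
  - by move=> A _; exact: lebQ_ge0.
  - exact: measure0.
  - by move=> A _; exact: measure_ge0.
  - move=> A mA AB; have [nu' Hnu'] := lebQ_dom N M0.
    exact: Hnu.
  - by move=> z /hg /andP[]; rewrite lee_fin.
  - by move=> z /QB [] ? _ _; split.
apply: (@le_trans _ _ (\int[nu \x lebR R]_(z in B) (cst c%:E z))).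
  apply: (@gintegral_mono _ _ _ (nu \x lebR R)).
  - exact: measure0.
  - by move=> z /hg /andP[]; rewrite lee_fin.
  - by move=> z _; rewrite lee_fin.
  - move=> z; rewrite /patch; case: ifPn => zQ.
      rewrite mem_set; last by apply: QB; rewrite -inE.
      by have /andP[] := hg z (set_mem zQ); rewrite lee_fin.
    by case: ifPn => _; rewrite lee_fin.
rewrite integral_cst// EFinM fineK//.
Qed.

End lebNsec.

Local Close Scope ereal_scope.
Section compact.
Variable R : realType.

Lemma distN_ltP N (x y : N.-tuple R) e : 0 < e ->
  distN x y < e <-> forall i, `|tnth x i - tnth y i| < e.
Proof.
move=> e0; rewrite /distN; split.
  by move/bigmax_ltP => [_ h] i; exact: h.
by move=> h; apply/bigmax_ltP; split.
Qed.

Definition phi N (t : N.-tuple R) : 'rV[R]_N := \row_i tnth t i.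
Definition psi N (v : 'rV[R]_N) : N.-tuple R := [tuple v ord0 i | i < N].
Arguments phi {N}. Arguments psi {N}.

Lemma psiK N (t : N.-tuple R) : psi (phi t) = t.
Proof. by apply: eq_from_tnth => i; rewrite tnth_mktuple mxE. Qed.

Lemma phiK N (v : 'rV[R]_N) : phi (psi v) = v.
Proof. by apply/rowP => i; rewrite mxE tnth_mktuple. Qed.

Lemma normrV_ltP N (v : 'rV[R]_N) e : 0 < e ->
  `|v| < e <-> forall i, `|v ord0 i| < e.
Proof.
move=> e0; rewrite [X in X < _]mx_normrE; split.
  by move/bigmax_ltP => [_ h] i; exact: (h (ord0, i)).
move=> h; apply/bigmax_ltP; split => // -[a b] _ /=.
by rewrite (ord1 a); exact: h.
Qed.

Lemma phi_dist N (x y : N.-tuple R) e : 0 < e ->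
  `|phi x - phi y| < e <-> distN x y < e.
Proof.
move=> e0; rewrite normrV_ltP// distN_ltP//.
by split=> h i; have := h i; rewrite !mxE.
Qed.

Lemma cont_bounded N (K : set (N.-tuple R)) (s : N.-tuple R -> R) :
  (exists M, forall x, K x -> forall i, `|tnth x i| <= M) ->
  (forall x, (forall e, 0 < e -> exists2 y, K y & distN x y < e) -> K x) ->
  continuous_on_RN K s -> exists B, forall x, K x -> s x <= B.
Proof.
move=> [M HM] Kcl sc.
have [K0|K0] := pselect (K = set0).
  by exists 0 => x; rewrite K0.
have [x0 Kx0] : K !=set0 by apply/set0P/eqP.
pose A := phi @` K.
pose f := fun v => s (psi v).
have A0 : A !=set0 by exists (phi x0), x0.
have cA : compact A.
  apply: bounded_closed_compact.
    exists (Num.max M 0); split; first by rewrite num_real.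
    move=> r Mr v [x Kx <-]; rewrite /=.
    have r0 : 0 < r by apply: le_lt_trans Mr; rewrite le_max lexx orbT.
    apply/ltW/normrV_ltP => // i; rewrite mxE; apply: le_lt_trans Mr.
    by rewrite le_max (HM _ Kx).
  move=> p clp; exists (psi p); last exact: phiK.
  apply: Kcl => e e0.
  have := clp (ball p e); rewrite -ball_normE.
  case=> [|w [[y Ky <-] pw]].
    by rewrite ball_normE; exact: nbhsx_ballx.
  exists y => //; rewrite -phi_dist// phiK; exact: pw.
have cf : {within A, continuous f}.
  apply/subspace_continuousP => v [x Kx <-].
  apply/cvgrPdist_lt => e e0.
  have [d d0 hd] := sc x Kx e e0.
  rewrite near_withinE; near=> w => -[y Ky wy].
  rewrite -wy /from_subspace /f !psiK distrC; apply: hd => //.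
  rewrite -phi_dist// wy.
  near: w; apply/nbhs_ballP; exists d => //= w; rewrite -ball_normE /=; exact.
have [c Ac Hc] := EVT_max_rV A0 cA cf.
exists (f c) => x Kx; have := Hc (phi x); rewrite /f psiK; apply.
by rewrite inE; exists x.
Unshelve. all: end_near.
Qed.
End compact.

Local Close Scope ereal_scope.
Section main1.
Variable R : realType.

Lemma closure_sub N (Om : set (N.-tuple R)) : Om `<=` closure_RN Om.
Proof.
move=> x Ox e e0; exists x => //; apply/distN_ltP => // i.
by rewrite subrr normr0.
Qed.

Lemma closure_closed N (Om : set (N.-tuple R)) x :
  (forall e, 0 < e -> exists2 y, closure_RN Om y & distN x y < e) -> closure_RN Om x.
Proof.
move=> h e e0.
have e20 : 0 < e / 2 by rewrite divr_gt0.
have [y cy xy] := h _ e20.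
have [z Oz yz] := cy _ e20.
exists z => //; apply/distN_ltP => // i.
move/distN_ltP : xy => /(_ e20 i) xy; move/distN_ltP : yz => /(_ e20 i) yz.
rewrite (splitr e) (le_lt_trans (ler_distD (tnth y i) _ _))//.
exact: ltrD.
Qed.

Lemma closure_bounded N (Om : set (N.-tuple R)) : bounded_RN Om ->
  exists M, forall x, closure_RN Om x -> forall i, `|tnth x i| <= M.
Proof.
move=> [M HM]; exists (M + 1) => x cx i.
have [z Oz xz] := cx 1 ltr01.
move/distN_ltP : xz => /(_ ltr01 i) xz.
have := HM _ Oz i => zM.
rewrite -(subrK (tnth z i) (tnth x i)).
apply: (le_trans (ler_normD _ _)); rewrite addrC; apply: lerD => //.
exact: ltW.
Qed.

Local Open Scope ereal_scope.

Lemma geq_integral d (T : measurableType d) (mu : set T -> \bar R) (D : set T) (f g : T -> \bar R) :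
  {in D, f =1 g} -> integral mu D f = integral mu D g.
Proof.
move=> fg; rewrite /integral (_ : f \_ D = g \_ D)//.
by apply/funext => x; rewrite /patch; case: ifPn => // /fg.
Qed.

Variable N : nat.
Implicit Types (D : set (N.-tuple R * R)) (q u : N.-tuple R * R -> R).

Lemma Lvar_le D q u (m : R) : (0 < m)%R ->
  \int[@lebQ R N]_(z in D) ((`|u z / m| `^ q z)%:E) <= 1 -> Lvar_norm D q u <= m%:E.
Proof. by move=> m0 h; apply: ereal_inf_lbound; exists m. Qed.

Lemma Lvar_ge0 D q u : 0 <= Lvar_norm D q u.
Proof. by apply: le_ereal_inf_tmp => _ [m [m0 _] <-]; rewrite lee_fin ltW. Qed.

Lemma Lvar_mono D q (E F : set (N.-tuple R * R)) :
  (forall z, D z -> (0 < q z)%R) -> (forall z, D z -> E z -> F z) ->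
  Lvar_norm D q (\1_E) <= Lvar_norm D q (\1_F).
Proof.
move=> q0 EF; apply: le_ereal_inf => _ [m [m0 hm] <-]; exists m => //; split => //.
apply: le_trans hm; apply: gintegral_mono.
- exact: lebQ0.
- by move=> z _; rewrite lee_fin powR_ge0.
- by move=> z _; rewrite lee_fin powR_ge0.
move=> z; rewrite /patch; case: ifPn => // zD; rewrite lee_fin.
have zD' : D z by rewrite -inE.
rewrite !indicE; case: (boolP (z \in E)) => zE.
  by rewrite mem_set//; apply: EF => //; rewrite -inE.
by rewrite mul0r normr0 powR0 ?powR_ge0// gt_eqF// q0.
Qed.

End main1.

End Aux.
Import Aux.
Arguments closure_sub {R N Om t}.
Arguments closure_closed {R N Om}.
Arguments closure_bounded {R N Om}.
Arguments Lvar_le {R N D q u}.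
Arguments Lvar_mono {R N D q}.
Arguments Lvar_ge0 {R N}.
Arguments geq_integral {R d T mu D}.

Theorem lemma2p5 (R : realType) (N : nat) (Om : set (N.-tuple R)) (T : R)
  (s p : N.-tuple R -> R) :
  open_RN Om -> bounded_RN Om -> 0 < T ->
  continuous_on_RN (closure_RN Om) s -> continuous_on_RN (closure_RN Om) p ->
  (forall x, closure_RN Om x -> 0 < p x) ->
  (forall x, closure_RN Om x -> 1 < s x * p x) ->
  let splus := sup [set s x | x in closure_RN Om] in
  exists2 C : R, 0 < C &
    forall f : N.-tuple R * R -> R,
      in_Lweak (QT Om T) (fun z => splus * p z.1) f ->
      (Lweak_norm (QT Om T) (fun z => p z.1) (fun z => (`|f z| `^ s z.1)%R)
       <= (C * (fine (Lweak_norm (QT Om T) (fun z => splus * p z.1) f) `^ splus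
                + 1))%:E)%E.
Proof.
move=> Oop Obd T0 sc pc p0 sp1 splus.
have [M [M0 HM]] := @lebQ_fin R N Om T Obd.
have [Om0|Omn] := pselect (Om = set0).
  exists 1 => // f _.
  apply: ge_ereal_sup => _ [l l0 <-].
  apply: (@le_trans _ _ 0%E); last by rewrite lee_fin mul1r addr_ge0 // powR_ge0.
  apply: mule_ge0_le0; first by rewrite lee_fin ltW.
  apply/lee_addgt0Pr => e e0; rewrite add0e.
  apply: Lvar_le => //.
  apply: le_trans (HM 0 (fun z => `|_ / e| `^ _) (lexx 0) _) _.
    by move=> z [] /=; rewrite Om0.
  by rewrite mul0r lee_fin ler01.
have [x0 Ox0] : Om !=set0 by apply/set0P/eqP.
have cx0 := closure_sub Ox0.
have [B HB] := @cont_bounded R N (closure_RN Om) s (closure_bounded Obd)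
  closure_closed sc.
have hsup : has_sup [set s x | x in closure_RN Om].
  split; first by exists (s x0), x0.
  by exists B => _ [x cx <-]; exact: HB.
have hs x : closure_RN Om x -> s x <= splus.
  by move=> cx; apply: sup_upper_bound => //; exists x.
have hs0 x : closure_RN Om x -> 0 < s x.
  move=> cx; have h1 := sp1 x cx; have h2 := p0 x cx.
  rewrite ltNge; apply/negP => sx0.
  have : s x * p x <= 0 by rewrite mulr_le0_ge0// ltW.
  lra.
have a0 : 0 < splus by apply: lt_le_trans (hs0 _ cx0) (hs _ cx0).
have hpD z : QT Om T z -> 0 < p z.1 /\ splus^-1 <= p z.1.
  move=> [Oz _]; have cz := closure_sub Oz; split; first exact: p0.
  rewrite -div1r ler_pdivrMr// mulrC; apply: ltW; apply: lt_le_trans (sp1 _ cz) _.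
  by rewrite ler_wpM2r ?hs// ltW// p0.
pose mu0 := (M + 1) `^ splus.
have mu01 : 1 <= mu0.
  rewrite /mu0 -[leLHS](powRr0 (M + 1)).
  apply: (@ler_powR _ (M + 1)); [by rewrite lerDr|exact: ltW].
have mu00 : 0 < mu0 by apply: lt_le_trans mu01.
exists (2 `^ splus + mu0); first by rewrite addr_gt0// powR_gt0.
move=> f [mf fin].
set Lw := Lweak_norm _ _ f.
have Lw0 : (0 <= Lw)%E.
  have h1 : (0 <= 1%:E * Lvar_norm (QT Om T) (fun z => (splus * p z.1)%R)
     (\1_[set z | (1 < `|f z|)%R]))%E.
    by apply: mule_ge0; [rewrite lee_fin|exact: Lvar_ge0].
  apply: le_trans h1 _.
  apply: ereal_sup_ubound; exists 1%R => //=; exact: ltr01.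
have LwE : Lw = (fine Lw)%:E by rewrite fineK// ge0_fin_numE.
set K := fine Lw.
have K0 : 0 <= K by rewrite fine_ge0.
have KA0 : 0 <= K `^ splus by rewrite powR_ge0.
have tw0 : 0 <= 2 `^ splus by rewrite powR_ge0.
apply: ge_ereal_sup => _ [l l0 <-].
case: (leP l 1) => l1.
  apply: (@le_trans _ _ (mu0%:E)).
    apply: (@le_trans _ _ (l%:E * mu0%:E)%E).
      apply: lee_wpmul2l; first by rewrite lee_fin ltW.
      apply: le_trans (Lvar_mono _ setT _ _) _.
      - by move=> z /hpD [].
      - by [].
      apply: Lvar_le => //.
      apply: le_trans (HM (M + 1)^-1 (fun z => `|_ / mu0| `^ p z.1) _ _) _.
      - by rewrite invr_ge0 addr_ge0.
      - move=> z Dz; have [pz ipz] := hpD z Dz.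
        rewrite powR_ge0 /= indicE in_setT mul1r ger0_norm ?invr_ge0 ?(ltW mu00)//.
        have hb : 0 < mu0^-1 <= 1 by rewrite invr_gt0 mu00 invf_le1.
        apply: le_trans (ger_powR hb ipz) _.
        by rewrite /mu0 -powRN -powRrM mulNr mulfV ?gt_eqF// powR_inv1// addr_ge0.
      rewrite lee_fin mulrC ler_pdivrMr; last by rewrite ltr_pwDr.
      by rewrite mul1r lerDl.
    by rewrite -EFinM lee_fin ler_piMl// ltW.
  rewrite lee_fin.
  have : 0 <= (2 `^ splus) * (K `^ splus) by rewrite mulr_ge0.
  have : 0 <= mu0 * (K `^ splus) by rewrite mulr_ge0// ltW.
  lra.
pose nu := l `^ splus^-1.
have nu0 : 0 < nu by rewrite powR_gt0// (lt_trans ltr01).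
have nu1 : 1 <= nu.
  rewrite /nu -[leLHS](powRr0 l); apply: (@ler_powR _ l); first exact: ltW.
  by rewrite invr_ge0 ltW.
have nuA : nu `^ splus = l.
  by rewrite /nu -powRrM mulVf ?gt_eqF// powRr1// ltW.
pose F := [set z | (nu < `|f z|)%R].
have EF : (Lvar_norm (QT Om T) (fun z => p z.1)
            \1_[set z | (l < `| `|f z| `^ s z.1 |)%R]
          <= Lvar_norm (QT Om T) (fun z => p z.1) (\1_F))%E.
  apply: Lvar_mono; first by move=> z /hpD [].
  move=> z Dz /= Ez; rewrite /F /= ltNge; apply/negP => fz.
  move: Ez; rewrite ger0_norm ?powR_ge0// ltNge => /negP; apply.
  have [Oz _] := Dz; have cz := closure_sub Oz.
  rewrite -nuA; apply: (@le_trans _ _ (nu `^ s z.1)).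
    apply: ge0_ler_powR => //; first exact: ltW (hs0 _ cz).
    by rewrite nnegrE ltW.
  by apply: ler_powR => //; exact: hs.
pose VF := Lvar_norm (QT Om T) (fun z => (splus * p z.1)%R) (\1_F).
have Fw : (nu%:E * VF <= K%:E)%E.
  by rewrite -LwE; apply: ereal_sup_ubound; exists nu.
have VF0 : (0 <= VF)%E by exact: Lvar_ge0.
have VFfin : VF \is a fin_num.
  rewrite ge0_fin_numE// ltNge; apply/negP; rewrite leye_eq => /eqP VFoo.
  by move: Fw; rewrite VFoo gt0_muley ?lte_fin// leye_eq.
pose v := fine VF.
have VFE : VF = v%:E by rewrite fineK.
have nuv : nu * v <= K by rewrite -lee_fin EFinM -VFE.
have : (VF < (v + nu^-1)%:E)%E by rewrite VFE lte_fin ltrDl invr_gt0.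
move/ereal_inf_lt => [_ [mu [mu0' hmu] <-]] muv.
rewrite lte_fin in muv.
have scale : (Lvar_norm (QT Om T) (fun z => p z.1) (\1_F) <= (mu `^ splus)%:E)%E.
  apply: Lvar_le; first exact: powR_gt0.
  rewrite (geq_integral _ (fun z => (`|\1_F z / mu| `^ (splus * p z.1))%:E)); first exact: hmu.
  move=> z /set_mem zD; have [pz _] := hpD z zD; congr EFin.
  rewrite indicE; case: (z \in F).
    rewrite !mul1r !ger0_norm ?invr_ge0 ?powR_ge0 ?(ltW mu0')//.
    rewrite -powRN -powRrM -(powR_inv1 (ltW mu0')) -powRrM; congr powR; ring.
  by rewrite !mul0r normr0 !powR0// ?mulf_neq0// gt_eqF.
apply: (@le_trans _ _ (l%:E * (mu `^ splus)%:E)%E).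
  apply: lee_wpmul2l; first by rewrite lee_fin ltW.
  exact: le_trans EF scale.
rewrite -EFinM lee_fin.
have hnm : nu * mu <= K + 1.
  have : nu * mu < nu * (v + nu^-1) by rewrite ltr_pM2l.
  rewrite mulrDr mulfV ?gt_eqF// => h; lra.
have e1 : l * mu `^ splus = (nu * mu) `^ splus by rewrite powRM ?nuA// ltW.
rewrite e1.
have e2 : (nu * mu) `^ splus <= (K + 1) `^ splus.
  apply: ge0_ler_powR => //; first exact: ltW.
    by rewrite nnegrE mulr_ge0// ltW.
  by rewrite nnegrE addr_ge0.
have e3 : (K + 1) `^ splus <= 2 `^ splus * (K `^ splus + 1).
  have h0 : 0 <= 2 `^ splus * K `^ splus by rewrite mulr_ge0.
  case: (leP K 1) => K1.
    have : (K + 1) `^ splus <= 2 `^ splus.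
      apply: ge0_ler_powR => //; first exact: ltW.
        by rewrite nnegrE addr_ge0.
      by rewrite nnegrE.
      lra.
    lra.
  have : (K + 1) `^ splus <= (2 * K) `^ splus.
    apply: ge0_ler_powR => //; first exact: ltW.
        by rewrite nnegrE addr_ge0.
      by rewrite nnegrE mulr_ge0.
    lra.
  rewrite powRM//; lra.
have : 0 <= mu0 * (K `^ splus + 1) by rewrite mulr_ge0// ?addr_ge0// ltW.
lra.
Qed.
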